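(* Let $\mathbb{A}$ be a medial algebra over a field of characteristic not $2,3$ and let $c$ be a nonzero idempotent with $L_c$ invertible. Define on the vector space $\mathbb{A}$ the new multiplication $x\circ y=L_c^{-1}(xy)$. Then $(\mathbb{A},\circ)$ is a unital commutative associative algebra.
   Context: All algebras are commutative, possibly nonassociative, finite-dimensional. Medial: $(xy)(zw)=(xz)(yw)$ identically. $L_c:x\mapsto cx$. *)

(* Defs.v *)
From HB Require Import structures.
From mathcomp Require Import all_boot all_order all_algebra.
Set Implicit Arguments. Unset Strict Implicit. Unset Printing Implicit Defensive.
Import GRing.Theory.
Local Open Scope ring_scope.

Definition bilinear_mul (K : fieldType) (V : lmodType K) (m : V -> V -> V) : Prop :=
  (forall (a : K) (x y z : V), m (a *: x + y) z = a *: m x z + m y z) /\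
  (forall (a : K) (x y z : V), m x (a *: y + z) = a *: m x y + m x z).

Definition medial (T : Type) (m : T -> T -> T) : Prop :=
  forall x y z w, m (m x y) (m z w) = m (m x z) (m y w).

(* Main.v *)
Require Import Defs.
From HB Require Import structures.
From mathcomp Require Import all_boot all_order all_algebra.
Import GRing.Theory.
Local Open Scope ring_scope.

Theorem proposition3p9 (K : fieldType) (V : vectType K) (mul : V -> V -> V)
  (hK2 : 2%N \notin [pchar K]) (hK3 : 3%N \notin [pchar K])
  (hbil : bilinear_mul mul) (hcomm : commutative mul) (hmed : medial mul)
  (c : V) (hc0 : c != 0) (hcc : mul c c = c)
  (Lcinv : V -> V) (hinv1 : cancel (mul c) Lcinv) (hinv2 : cancel Lcinv (mul c)) :
  let circ := fun x y => Lcinv (mul x y) in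
  [/\ bilinear_mul circ, commutative circ, associative circ
    & exists e : V, forall x, circ e x = x /\ circ x e = x].
Proof.
move=> circ.
have [hl hr] := hbil.
have Llin : forall (a : K) u v, Lcinv (a *: u + v) = a *: Lcinv u + Lcinv v.
  move=> a u v.
  by rewrite -{1}(hinv2 u) -{1}(hinv2 v) -hr hinv1.
split.
- split=> a x y z; rewrite /circ.
  + by rewrite hl Llin.
  + by rewrite hr Llin.
- by move=> x y; rewrite /circ hcomm.
- move=> x y z; rewrite /circ; congr (Lcinv _).
  apply: (can_inj hinv1).
  have h1 : mul c (mul (Lcinv (mul x y)) z) = mul (mul x y) (mul c z).
    by rewrite -{1}hcc hmed hinv2 hcomm.
  have h2 : mul c (mul x (Lcinv (mul y z))) = mul (mul c x) (mul y z).
    by rewrite -{1}hcc hmed hinv2.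
  rewrite h2 h1 [in RHS]hmed (hcomm x c).
  by rewrite -hmed.
- exists c => x; rewrite /circ hinv1; split => //.
  by rewrite hcomm hinv1.
Qed.
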